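(* Let $f:\mathbb{R}^n\to\mathbb{R}$ be convex and differentiable, and let $x_*$ be a minimizer of $f$ on $\mathbb{R}^n$, $f_*=f(x_* )$. Fix a starting point $x^0\in\mathbb{R}^n$ and put $R=\|x^0-x_*\|_2$, $B_R(x_* )=\{x:\|x-x_*\|_2\le R\}$. Assume that for some $L>0$ $$\|\nabla f(y)-\nabla f(x)\|_2\le L\|y-x\|_2\quad\text{for all } x,y\in B_R(x_* ).$$ Consider the fast gradient method (FGM) with $x^0=y^0=z^0$ and, for $k=0,1,\dots$, $$x^{k+1}=\tau_k z^k+(1-\tau_k)y^k,\qquad y^{k+1}=x^{k+1}-\tfrac1L\nabla f(x^{k+1}),\qquad z^{k+1}=z^k-\alpha_{k+1}\nabla f(x^{k+1}),$$ where $\alpha_{k+1}=\frac{k+2}{2L}$ and $\tau_k=\frac{2}{k+2}$. Then for every $N\ge1$ the generated points satisfy $$\max\{\|x^k-x_*\|_2,\|y^k-x_*\|_2,\|z^k-x_*\|_2\}\le\|x^0-x_*\|_2,\qquad k=0,\dots,N,$$ and, with $$\bar y^N=\frac{1}{N(N+3)}\Big(\sum_{k=1}^{N-1}y^k+(N+1)^2y^N\Big),$$ one has $$f(\bar y^N)\le\frac{4L}{N(N+3)}\min_{x\in\mathbb{R}^n}\Big\{\sum_{k=0}^{N-1}\frac{k+2}{2L}\big\{f(x^{k+1})+\langle\nabla f(x^{k+1}),x-x^{k+1}\rangle\big\}+\frac12\|z^0-x\|_2^2\Big\},$$ and consequently $$f(\bar y^N)-f_*\le\frac{2L\|z^0-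x_*\|_2^2}{N(N+3)}\le\frac{2LR^2}{(N+1)^2}.$$
   Context: $\|\cdot\|_2$ is the Euclidean norm. The step sizes $\alpha_{k+1}=\frac{k+2}{2L}$, $\tau_k=\frac{2}{k+2}$ are the solution of $\alpha_1=1/L$, $\alpha_k^2L=\alpha_{k+1}^2L-\alpha_{k+1}+\frac{1}{4L}$, $\tau_k=\frac{1}{\alpha_{k+1}L}$. *)

(* Defs.v *)
From HB Require Import structures.
From mathcomp Require Import all_boot all_order all_algebra.
From mathcomp Require Import all_classical all_reals all_analysis.
Set Implicit Arguments. Unset Strict Implicit. Unset Printing Implicit Defensive.
Import Order.TTheory GRing.Theory Num.Theory.
Import numFieldNormedType.Exports.
Local Open Scope ring_scope.

Definition dotv {R : realType} {n : nat} (u v : 'rV[R]_n) : R :=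
  \sum_(i < n) u ord0 i * v ord0 i.
Definition enorm {R : realType} {n : nat} (u : 'rV[R]_n) : R :=
  Num.sqrt (dotv u u).

Definition convex_fun {R : realType} {n : nat} (f : 'rV[R]_n -> R) : Prop :=
  forall (x y : 'rV[R]_n) (t : R), 0 <= t <= 1 ->
    f (t *: x + (1 - t) *: y) <= t * f x + (1 - t) * f y.

Definition has_gradient {R : realType} {n : nat}
    (f : 'rV[R]_n -> R) (gf : 'rV[R]_n -> 'rV[R]_n) : Prop :=
  forall x : 'rV[R]_n, differentiable f x /\ forall v, 'd f x v = dotv (gf x) v.

Fixpoint fgm {R : realType} {n : nat} (L : R) (gf : 'rV[R]_n -> 'rV[R]_n)
    (x0 : 'rV[R]_n) (k : nat) : 'rV[R]_n * 'rV[R]_n * 'rV[R]_n :=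
  match k with
  | 0 => (x0, x0, x0)
  | k'.+1 =>
      let '(_, y, z) := fgm L gf x0 k' in
      let tau : R := 2 / (k'%:R + 2) in
      let alpha : R := (k'%:R + 2) / (2 * L) in
      let xn := tau *: z + (1 - tau) *: y in
      (xn, xn - L^-1 *: gf xn, z - alpha *: gf xn)
  end.

Definition fgm_x {R : realType} {n : nat} L gf (x0 : 'rV[R]_n) k := (fgm L gf x0 k).1.1.
Definition fgm_y {R : realType} {n : nat} L gf (x0 : 'rV[R]_n) k := (fgm L gf x0 k).1.2.
Definition fgm_z {R : realType} {n : nat} L gf (x0 : 'rV[R]_n) k := (fgm L gf x0 k).2.

Definition fgm_ybar {R : realType} {n : nat} L gf (x0 : 'rV[R]_n) (N : nat) : 'rV[R]_n :=
  (N%:R * (N%:R + 3))^-1 *: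
    (\sum_(1 <= k < N) fgm_y L gf x0 k + (N%:R + 1) ^+ 2 *: fgm_y L gf x0 N).

Definition fgm_model {R : realType} {n : nat} (f : 'rV[R]_n -> R) L gf
    (x0 : 'rV[R]_n) (N : nat) (x : 'rV[R]_n) : R :=
  \sum_(0 <= k < N)
     ((k%:R + 2) / (2 * L)) *
       (f (fgm_x L gf x0 k.+1) + dotv (gf (fgm_x L gf x0 k.+1)) (x - fgm_x L gf x0 k.+1))
  + 2^-1 * enorm (fgm_z L gf x0 0 - x) ^+ 2.

(* Main.v *)
Require Import Defs.
From HB Require Import structures.
From mathcomp Require Import all_boot all_order all_algebra.
From mathcomp Require Import all_classical all_reals all_analysis.
From mathcomp Require Import ring lra.
Import Order.TTheory GRing.Theory Num.Theory.
Import numFieldNormedType.Exports.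
Local Open Scope ring_scope.
Set Implicit Arguments. Unset Strict Implicit.



Section Dot.
Variables (R : realType) (n : nat).
Implicit Types u v w : 'rV[R]_n.

Lemma dotvC u v : dotv u v = dotv v u.
Proof. by apply: eq_bigr => i _; rewrite mulrC. Qed.

Lemma dotvDl u v w : dotv (u + v) w = dotv u w + dotv v w.
Proof. by rewrite /dotv -big_split; apply: eq_bigr => i _; rewrite !mxE mulrDl. Qed.

Lemma dotvDr u v w : dotv w (u + v) = dotv w u + dotv w v.
Proof. by rewrite dotvC dotvDl !(dotvC w). Qed.

Lemma dotvZl a u v : dotv (a *: u) v = a * dotv u v.
Proof. by rewrite /dotv mulr_sumr; apply: eq_bigr => i _; rewrite !mxE mulrA. Qed.

Lemma dotvZr a u v : dotv v (a *: u) = a * dotv v u.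
Proof. by rewrite dotvC dotvZl dotvC. Qed.

Lemma dotvNl u v : dotv (- u) v = - dotv u v.
Proof. by rewrite -scaleN1r dotvZl mulN1r. Qed.

Lemma dotvNr u v : dotv v (- u) = - dotv v u.
Proof. by rewrite dotvC dotvNl dotvC. Qed.

Lemma dotvBl u v w : dotv (u - v) w = dotv u w - dotv v w.
Proof. by rewrite dotvDl dotvNl. Qed.

Lemma dotvBr u v w : dotv w (u - v) = dotv w u - dotv w v.
Proof. by rewrite dotvDr dotvNr. Qed.

Lemma dotv0l v : dotv 0 v = 0.
Proof. by rewrite -(scale0r 0) dotvZl mul0r. Qed.

Lemma dotv0r v : dotv v 0 = 0.
Proof. by rewrite dotvC dotv0l. Qed.

Lemma dotv_ge0 u : 0 <= dotv u u.
Proof. by apply: sumr_ge0 => i _; rewrite -expr2 sqr_ge0. Qed.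

Lemma dotv_sum (g : 'rV[R]_n) (F : nat -> 'rV[R]_n) a b :
  dotv g (\sum_(a <= k < b) F k) = \sum_(a <= k < b) dotv g (F k).
Proof.
apply: (big_morph (dotv g)); first by move=> x y; rewrite dotvDr.
exact: dotv0r.
Qed.

Lemma enorm_sq u : enorm u ^+ 2 = dotv u u.
Proof. by rewrite /enorm sqr_sqrtr // dotv_ge0. Qed.

Lemma enorm_ge0 u : 0 <= enorm u.
Proof. exact: sqrtr_ge0. Qed.

Lemma enorm_le u v : (enorm u <= enorm v) = (dotv u u <= dotv v v).
Proof. by rewrite /enorm ler_sqrt // dotv_ge0. Qed.

Lemma enormZ a u : enorm (a *: u) = `|a| * enorm u.
Proof.
by rewrite /enorm dotvZl dotvZr mulrA -expr2 sqrtrM ?sqr_ge0 // sqrtr_sqr.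
Qed.

Lemma cs_sq u v : dotv u v ^+ 2 <= dotv u u * dotv v v.
Proof.
set A := dotv u u; set B := dotv u v; set C := dotv v v.
have C0 : 0 <= C by apply: dotv_ge0.
have key : forall t, 0 <= A - 2 * t * B + t ^+ 2 * C.
  move=> t; have := dotv_ge0 (u - t *: v).
  rewrite !(dotvBl, dotvBr, dotvZl, dotvZr) (dotvC v u) -/A -/B -/C.
  by move=> H; apply: le_trans H _; rewrite le_eqVlt; apply/orP; left; apply/eqP; ring.
have [C0'|Cpos] := eqVneq C 0.
  have [B0|Bn0] := eqVneq B 0; first by rewrite B0 expr0n /= mulr_ge0 ?dotv_ge0.
  have := key ((A + 1) / (2 * B)); rewrite C0' mulr0 addr0.
  have -> : 2 * ((A + 1) / (2 * B)) * B = A + 1 by field; rewrite Bn0.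
  by move=> H; exfalso; lra.
have Cp : 0 < C by rewrite lt_def Cpos C0.
have := key (B / C).
have -> : A - 2 * (B / C) * B + (B / C) ^+ 2 * C = (A * C - B ^+ 2) / C by field; rewrite Cpos.
move=> H; have : 0 <= (A * C - B ^+ 2) / C * C by apply: mulr_ge0 => //; exact: ltW.
by rewrite divfK ?Cpos // subr_ge0.
Qed.

Lemma cs u v : dotv u v <= enorm u * enorm v.
Proof.
apply: le_trans (ler_norm _) _.
rewrite /enorm -sqrtrM ?dotv_ge0 // -sqrtr_sqr ler_sqrt ?mulr_ge0 ?dotv_ge0 //.
exact: cs_sq.
Qed.

Lemma dot_convex (t : R) u v : 0 <= t <= 1 ->
  dotv (t *: u + (1 - t) *: v) (t *: u + (1 - t) *: v) <=
  t * dotv u u + (1 - t) * dotv v v.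
Proof.
case/andP=> t0 t1.
have E : t * dotv u u + (1 - t) * dotv v v -
   dotv (t *: u + (1 - t) *: v) (t *: u + (1 - t) *: v)
   = t * (1 - t) * dotv (u - v) (u - v).
  rewrite !(dotvDl, dotvDr, dotvNl, dotvNr, dotvZl, dotvZr) (dotvC v u); ring.
by rewrite -subr_ge0 E mulr_ge0 ?dotv_ge0 // mulr_ge0 // subr_ge0.
Qed.

Lemma dot_expand (e g : 'rV[R]_n) (a : R) :
  dotv (e + a *: g) (e + a *: g) = dotv e e + 2 * a * dotv g e + a ^+ 2 * dotv g g.
Proof. rewrite dotvDl !dotvDr !dotvZl !dotvZr (dotvC e g); ring. Qed.

End Dot.



Section Anal.
Variables (R : realType) (n : nat) (f : 'rV[R]_n -> R) (gf : 'rV[R]_n -> 'rV[R]_n).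
Hypothesis Hg : has_gradient f gf.

Lemma deriv_line (p d : 'rV[R]_n) (t : R) :
  is_derive t 1 (fun s => f (p + s *: d)) (dotv (gf (p + t *: d)) d).
Proof.
set q := p + t *: d.
have E : (fun r : R => r^-1 *: (((fun s => f (p + s *: d)) \o shift t) (r *: 1) - f (p + t *: d)))
   = (fun r : R => r^-1 *: ((f \o shift q) (r *: d) - f q)).
  apply/funext => r /=; congr (_ *: (_ - _)); congr f.
  by rewrite /q [r *: 1]mulr1 scalerDl addrCA.
have [df dfE] := Hg q.
split; first by rewrite /derivable E; exact: diff_derivable.
by rewrite /derive E -dfE; exact: deriveE.
Qed.

End Anal.



Section Anal2.
Variables (R : realType) (n : nat) (f : 'rV[R]_n -> R) (gf : 'rV[R]_n -> 'rV[R]_n).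
Hypothesis Hg : has_gradient f gf.

Lemma dir_le (x d : 'rV[R]_n) (C : R) :
  (forall r : R, 0 < r < 1 -> f (r *: d + x) - f x <= r * C) ->
  dotv (gf x) d <= C.
Proof.
move=> H.
have [df dfE] := Hg x.
rewrite -dfE -deriveE //.
set q := (fun r : R => r^-1 *: ((f \o shift x) (r *: d) - f x)).
have cv : cvg (q @ 0^')%classic by exact: diff_derivable.
rewrite /derive -/q (cvg_at_rightE q 0 cv).
have cvr : (q @ at_right 0 --> lim (q @ 0^'))%classic.
  move=> A /cv /nbhs_ballP [_ /posnumP[e] xe_A].
  by exists e%:num => //= y xe_y /gt_eqF/negbT/xe_A; exact.
apply: limr_le; first by apply/cvg_ex; eexists; exact: cvr.
exists 1 => //= r; rewrite /ball /= sub0r normrN => /ltr_normlP [_ r1] r0.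
rewrite /q /= -(@ler_pM2l _ r) // mulrA mulfV ?gt_eqF // mul1r.
by apply: H; rewrite r0 r1.
Qed.

Lemma dir_ge (x d : 'rV[R]_n) (C : R) :
  (forall r : R, 0 < r < 1 -> r * C <= f (r *: d + x) - f x) ->
  C <= dotv (gf x) d.
Proof.
move=> H.
have [df dfE] := Hg x.
rewrite -dfE -deriveE //.
set q := (fun r : R => r^-1 *: ((f \o shift x) (r *: d) - f x)).
have cv : cvg (q @ 0^')%classic by exact: diff_derivable.
rewrite /derive -/q (cvg_at_rightE q 0 cv).
have cvr : (q @ at_right 0 --> lim (q @ 0^'))%classic.
  move=> A /cv /nbhs_ballP [_ /posnumP[e] xe_A].
  by exists e%:num => //= y xe_y /gt_eqF/negbT/xe_A; exact.
apply: limr_ge; first by apply/cvg_ex; eexists; exact: cvr.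
exists 1 => //= r; rewrite /ball /= sub0r normrN => /ltr_normlP [_ r1] r0.
rewrite /q /= -(@ler_pM2l _ r) // mulrA mulfV ?gt_eqF // mul1r.
by apply: H; rewrite r0 r1.
Qed.

Lemma grad_ineq (Hc : convex_fun f) (x y : 'rV[R]_n) :
  f x + dotv (gf x) (y - x) <= f y.
Proof.
rewrite addrC -lerBrDr; apply: dir_le => r /andP[r0 r1].
have E : r *: (y - x) + x = r *: y + (1 - r) *: x.
  by rewrite scalerBr scalerBl scale1r -addrA (addrC (- _)).
rewrite E; have := Hc y x r; rewrite ltW // ltW // => /(_ isT) H.
lra.
Qed.

End Anal2.



Section Anal3.
Variables (R : realType) (n : nat) (f : 'rV[R]_n -> R) (gf : 'rV[R]_n -> 'rV[R]_n).
Hypothesis Hg : has_gradient f gf.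

Lemma descent (S : 'rV[R]_n -> Prop) (L : R) (HL : 0 <= L)
  (Lip : forall x y, S x -> S y -> enorm (gf y - gf x) <= L * enorm (y - x))
  (p d : 'rV[R]_n) :
  (forall t, 0 <= t <= 1 -> S (p + t *: d)) ->
  f (p + d) <= f p + dotv (gf p) d + L / 2 * dotv d d.
Proof.
move=> Hseg.
set c1 := dotv (gf p) d; set c2 := L / 2 * dotv d d.
pose k : R -> R := (fun s => f (p + s *: d)) - (c1 \*: id) - (c2 \*: (id ^+ 2)).
have Hk : forall s : R, is_derive s (1 : R) k (dotv (gf (p + s *: d)) d - c1 - c2 * (2 * s)).
  move=> s; apply: is_derive_eq.
    apply: is_deriveB; first apply: is_deriveB.
    exact: deriv_line.
  by rewrite /= [c1%:A]mulr1 [(2 * s)%:A]mulr1.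
have cont : {within `[0, 1], continuous k}%classic.
  apply: derivable_within_continuous => x _.
  by case: (Hk x).
have [c /andP[c0 c1'] Hc] := MVT (@ltr01 R) (fun x _ => Hk x) cont.
have Sp : S p by have := Hseg 0; rewrite scale0r addr0 lexx ler01; apply.
have Sq : S (p + c *: d) by apply: Hseg; rewrite !ltW.
have Hd : dotv (gf (p + c *: d)) d - c1 - c2 * (2 * c) <= 0.
  have E1 : dotv (gf (p + c *: d)) d - c1 = dotv (gf (p + c *: d) - gf p) d.
    by rewrite dotvBl.
  have H1 : dotv (gf (p + c *: d) - gf p) d <= L * (c * enorm d) * enorm d.
    idtac "G7"; match goal with |- ?g => idtac g end; apply: le_trans (cs _ _) _.
    rewrite ler_wpM2r ?enorm_ge0 //; apply: le_trans (Lip _ _ Sp Sq) _.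
    by rewrite addrAC subrr add0r enormZ (ger0_norm (ltW c0)).
  have E2 : L * (c * enorm d) * enorm d = c2 * (2 * c).
    rewrite /c2 -enorm_sq.
    by field.
  move: H1 E1; rewrite E2; lra.
have : k 1 - k 0 <= 0 by rewrite Hc subr0 mulr1.
have Ek : forall s, k s = f (p + s *: d) - c1 * s - c2 * (s * s) by [].
rewrite !Ek scale0r scale1r addr0 !mulr0 !mulr1; lra.
Qed.
End Anal3.



Section Coco.
Variables (R : realType) (n : nat) (f : 'rV[R]_n -> R) (gf : 'rV[R]_n -> 'rV[R]_n).
Variables (xs x0 : 'rV[R]_n) (L : R).
Hypothesis Hc : convex_fun f.
Hypothesis Hg : has_gradient f gf.
Hypothesis Hmin : forall x, f xs <= f x.
Hypothesis HL : 0 < L.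
Definition inB (x : 'rV[R]_n) := dotv (x - xs) (x - xs) <= dotv (x0 - xs) (x0 - xs).
Hypothesis Lip : forall x y : 'rV[R]_n, enorm (x - xs) <= enorm (x0 - xs) ->
     enorm (y - xs) <= enorm (x0 - xs) ->
     enorm (gf y - gf x) <= L * enorm (y - x).

Lemma LipB (x y : 'rV[R]_n) : inB x -> inB y -> enorm (gf y - gf x) <= L * enorm (y - x).
Proof. by rewrite /inB -!enorm_le; exact: Lip. Qed.

Lemma descentB (p d : 'rV[R]_n) :
  (forall t, 0 <= t <= 1 -> inB (p + t *: d)) ->
  f (p + d) <= f p + dotv (gf p) d + L / 2 * dotv d d.
Proof. by apply: (descent Hg (S := inB) (ltW HL)) => x y; exact: LipB. Qed.

Lemma coco (p : 'rV[R]_n) : inB p ->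
  dotv (gf p) (gf p) <= 2 * L * dotv (gf p) (p - xs).
Proof.
move=> Bp.
set g := gf p; set G := dotv g g; set c := dotv g (p - xs).
set r := dotv (p - xs) (p - xs).
have G0 : 0 <= G by apply: dotv_ge0.
have fc : f p - f xs <= c.
  have := grad_ineq Hg Hc p xs.
  have -> : dotv (gf p) (xs - p) = - c by rewrite -dotvNr opprB.
  by move=> H; lra.
have c0 : 0 <= c by have := Hmin p; lra.
have [cz|cpos] := eqVneq c 0.
  have : 0 <= dotv g (- g).
    apply: (dir_ge Hg) => t _; rewrite mulr0 subr_ge0.
    by apply: le_trans (Hmin _); have := Hmin p; lra.
  by rewrite dotvNr -/G cz mulr0 => H; lra.
have cp : 0 < c by rewrite lt_def cpos c0.
rewrite leNgt; apply/negP => Hlt.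
have Gp : 0 < G by apply: le_lt_trans Hlt; rewrite mulr_ge0 // mulr_ge0 // ltW.
set s0 := 2 * c / G.
have hs0G : s0 * G = 2 * c by rewrite /s0 divfK // gt_eqF.
have s00 : 0 <= s0 by rewrite /s0 divr_ge0 // ?mulr_ge0 // ltW.
have seg : forall t, 0 <= t <= 1 -> inB (p + t *: (- s0 *: g)).
  move=> t /andP[t0 t1]; rewrite /inB; apply: le_trans Bp.
  have -> : p + t *: (- s0 *: g) - xs = (p - xs) + (- (t * s0)) *: g.
    by rewrite scalerA mulrN addrAC.
  rewrite dot_expand -/c -/r -/G.
  idtac "G0"; match goal with |- ?g => idtac g end.
  have E : (- (t * s0)) ^+ 2 * G = t * t * s0 * (2 * c).
    by rewrite -hs0G; ring.
  rewrite E.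
  have h1 : 0 <= t * (1 - t) by rewrite mulr_ge0 // subr_ge0.
  have h2 : 0 <= s0 * c by rewrite mulr_ge0.
  nra.
have D := descentB seg.
have Hm := Hmin (p + - s0 *: g).
rewrite !(dotvZl, dotvZr) -/G in D.
have E1 : L / 2 * (- s0 * (- s0 * G)) = L * s0 * c.
  have -> : L / 2 * (- s0 * (- s0 * G)) = L / 2 * s0 * (s0 * G) by ring.
  by rewrite hs0G; field.
have E2 : - s0 * G = - (2 * c) by rewrite mulNr hs0G.
rewrite E1 E2 in D.
have h1 : 1 * c <= (L * s0) * c by lra.
rewrite ler_pM2r // in h1.
have h2 : (L * s0) * G < 1 * G by rewrite -mulrA hs0G mul1r; lra.
rewrite ltr_pM2r // in h2.
lra.
Qed.

Local Notation X := (fgm_x L gf x0).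
Local Notation Y := (fgm_y L gf x0).
Local Notation Z := (fgm_z L gf x0).
Local Notation tau k := (2 / ((k : nat)%:R + 2) : R).
Local Notation al k := (((k : nat)%:R + 2) / (2 * L) : R).

Lemma fgm0 : X 0 = x0 /\ Y 0 = x0 /\ Z 0 = x0.
Proof. by []. Qed.

Lemma fgmS k : X k.+1 = tau k *: Z k + (1 - tau k) *: Y k /\
  Y k.+1 = X k.+1 - L^-1 *: gf (X k.+1) /\
  Z k.+1 = Z k - al k *: gf (X k.+1).
Proof.
rewrite /fgm_x /fgm_y /fgm_z /=.
by case: (fgm L gf x0 k) => [[a b] c].
Qed.

Lemma tau01 k : 0 <= tau k <= 1.
Proof.
apply/andP; split; first by rewrite divr_ge0 // addr_ge0.
by rewrite ler_pdivrMr ?mul1r ?lerDr // ltr_wpDl.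
Qed.

Lemma tau_al k : tau k * al k = L^-1.
Proof.
have h : (k%:R + 2 : R) != 0 by rewrite gt_eqF // ltr_wpDl.
by field; rewrite h gt_eqF.
Qed.

Lemma inB_conv (t : R) u v : 0 <= t <= 1 -> inB u -> inB v -> inB (t *: u + (1 - t) *: v).
Proof.
move=> t01 Bu Bv; rewrite /inB.
have -> : t *: u + (1 - t) *: v - xs = t *: (u - xs) + (1 - t) *: (v - xs).
  by rewrite !scalerBr addrACA -opprD -scalerDl [t + _]addrC subrK scale1r.
apply: le_trans (dot_convex _ _ t01) _.
case/andP: t01 => t0 t1.
have t1' : 0 <= 1 - t by rewrite subr_ge0.
have := ler_wpM2l t0 Bu; have := ler_wpM2l t1' Bv.
lra.
Qed.

Lemma K2 k : 0 < (k%:R + 2 : R).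
Proof. by rewrite ltr_wpDl. Qed.

Lemma step k : inB (Y k) -> inB (Z k) ->
  inB (X k.+1) /\
  f (Y k.+1) <= f (X k.+1) - dotv (gf (X k.+1)) (gf (X k.+1)) / (2 * L) /\
  forall u, (k%:R + 2) ^+ 2 / (4 * L) * f (Y k.+1) - ((k%:R + 1) ^+ 2 - 1) / (4 * L) * f (Y k)
            + dotv (Z k.+1 - u) (Z k.+1 - u) / 2
        <= al k * (f (X k.+1) + dotv (gf (X k.+1)) (u - X k.+1)) + dotv (Z k - u) (Z k - u) / 2.
Proof.
move=> BY BZ; have [EX [EY EZ]] := fgmS k.
have BX : inB (X k.+1) by rewrite EX; apply: inB_conv => //; exact: tau01.
have Lne : L != 0 by rewrite gt_eqF.
have Kne : (k%:R + 2 : R) != 0 by rewrite gt_eqF // K2.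
move: EY EZ; set X' := X k.+1; set g := gf X'; move=> EY EZ.
set G := dotv g g.
have G0 : 0 <= G by exact: dotv_ge0.
have desc : f (Y k.+1) <= f X' - G / (2 * L).
  have hco := coco BX; rewrite -/g -/G in hco.
  have seg : forall t, 0 <= t <= 1 -> inB (X' + t *: (- L^-1 *: g)).
    move=> t /andP[t0 t1]; rewrite /inB; apply: le_trans BX.
    have -> : X' + t *: (- L^-1 *: g) - xs = (X' - xs) + (- (t / L)) *: g.
      by apply/rowP => i; rewrite !mxE; ring.
    rewrite dot_expand -/G.
    set c := dotv g (X' - xs) in hco *.
    have w0 : 0 <= t / L by rewrite divr_ge0 // ltW.
    have wL : t / L * L <= 1 by rewrite divfK.
    have c0 : 0 <= c.
      have : 0 <= 2 * L * c by apply: le_trans hco.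
      by rewrite pmulr_rge0 // mulr_gt0.
    have h1 : (t / L) ^+ 2 * G <= (t / L) ^+ 2 * (2 * L * c) by rewrite ler_wpM2l // sqr_ge0.
    have h2 : 0 <= t / L * c by rewrite mulr_ge0.
    nra.
  have D := descentB seg.
  rewrite !(dotvZl, dotvZr) -/G in D.
  have -> : Y k.+1 = X' + - L^-1 *: g by rewrite EY scaleNr.
  have E : L / 2 * (- L^-1 * (- L^-1 * G)) = G / (2 * L) by field.
  rewrite E in D; have E2 : - L^-1 * G = - (G / L) by rewrite mulNr mulrC.
  rewrite E2 in D; apply: le_trans D _.
  have E3 : G / L = 2 * (G / (2 * L)) by field.
  rewrite E3; lra.
split => //; split => // u.
set a := al k.
have V1 : X' - Z k = (a * L - 1) *: (Y k - X').
  rewrite /X' EX; apply/rowP => i; rewrite !mxE /a.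
  move: (Y k 0 i) (Z k 0 i) (k%:R : R) Kne => y z K Kne; field; by rewrite Kne Lne.
have V2 : u - X' = - (X' - Z k) - (Z k - u).
  by apply/rowP => i; rewrite !mxE; ring.
have V3 : Z k.+1 - u = (Z k - u) + (- a) *: g.
  by rewrite EZ /a; apply/rowP => i; rewrite !mxE; ring.
have E1 : dotv g (u - X') = - ((a * L - 1) * dotv g (Y k - X')) - dotv g (Z k - u).
  by rewrite V2 (dotvBr (- (X' - Z k)) (Z k - u) g) dotvNr V1 dotvZr.
rewrite V3 dot_expand E1 -/G.
set s1 := dotv g (Y k - X'); set s2 := dotv g (Z k - u); set D0 := dotv (Z k - u) (Z k - u).
have conv : f X' + s1 <= f (Y k) by exact: grad_ineq.
have aL1 : 1 <= a * L.
  have -> : a * L = (k%:R + 2) / 2 by rewrite /a; field.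
  have K0 : 0 <= (k%:R : R) by [].
  lra.
have eA1 : (k%:R + 2) ^+ 2 / (4 * L) = a * a * L by rewrite /a; field.
have eA0 : ((k%:R + 1) ^+ 2 - 1) / (4 * L) = a * a * L - a by rewrite /a; field.
rewrite eA1 eA0.
have a0 : 0 <= a by rewrite /a divr_ge0 ?(ltW (K2 k)) // mulr_ge0 // ltW.
have P1 : (a * a * L - a) * (f X' + s1) <= (a * a * L - a) * f (Y k).
  apply: ler_wpM2l => //.
  have -> : a * a * L - a = a * (a * L - 1) by ring.
  by rewrite mulr_ge0 // subr_ge0.
have P2 : a * a * L * f (Y k.+1) <= a * a * L * f X' - a * a * G / 2.
  have aaL : 0 <= a * a * L := mulr_ge0 (mulr_ge0 a0 a0) (ltW HL).
  have := ler_wpM2l aaL desc.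
  by have -> : a * a * L * (f X' - G / (2 * L)) = a * a * L * f X' - a * a * G / 2 by field.
lra.
Qed.

Lemma Yconv k : Y k.+1 = tau k *: Z k.+1 + (1 - tau k) *: Y k.
Proof.
have [EX [EY EZ]] := fgmS k.
have Lne : L != 0 by rewrite gt_eqF.
have Kne : (k%:R + 2 : R) != 0 by rewrite gt_eqF // K2.
rewrite EY EZ; set g := gf (X k.+1); rewrite EX.
apply/rowP => i; rewrite !mxE.
move: (g 0 i) (Z k 0 i) (Y k 0 i) => gi zi yi.
field; by rewrite Kne Lne.
Qed.

Definition LHSm (m : nat) (u : 'rV[R]_n) : R :=
  \sum_(0 <= j < m) al j * (f (X j.+1) + dotv (gf (X j.+1)) (u - X j.+1))
  + dotv (Z 0 - u) (Z 0 - u) / 2.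

Lemma tele m u : (forall j, (j < m)%N -> inB (Y j) /\ inB (Z j)) ->
  (m%:R + 1) ^+ 2 / (4 * L) * f (Y m) + \sum_(0 <= j < m) f (Y j) / (4 * L)
    + dotv (Z m - u) (Z m - u) / 2 <= LHSm m u + f (Y 0) / (4 * L).
Proof.
elim: m => [|m IH] H.
  rewrite /LHSm !big_geq // add0r addr0 expr1n mul1r; lra.
have IH' := IH (fun j hj => H j (ltnW hj)).
have [BY BZ] := H m (ltnSn m).
have [_ [_ St]] := step BY BZ.
have S := St u.
rewrite /LHSm !big_nat_recr //= in IH' *.
rewrite -/(LHSm m u) in IH'.
rewrite mulrSr.
move: IH' S; rewrite /LHSm.
lra.
Qed.

Lemma sum_const_R a b (c : R) : \sum_(a <= j < b) c = (b - a)%:R * c.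
Proof. by rewrite sumr_const_nat mulr_natl. Qed.

Lemma sum_al m : \sum_(0 <= j < m) al j = m%:R * (m%:R + 3) / (4 * L).
Proof.
have Lne : L != 0 by rewrite gt_eqF.
elim: m => [|m IH]; first by rewrite big_geq // mul0r mul0r.
rewrite big_nat_recr //= IH mulrSr; field; exact: Lne.
Qed.

Lemma LHS_xs m : LHSm m xs <= m%:R * (m%:R + 3) / (4 * L) * f xs + dotv (Z 0 - xs) (Z 0 - xs) / 2.
Proof.
rewrite /LHSm lerD2r -sum_al mulr_suml.
apply: ler_sum => j _; apply: ler_wpM2l.
  by rewrite divr_ge0 ?(ltW (K2 j)) // mulr_ge0 // ltW.
have := grad_ineq Hg Hc (X j.+1) xs; lra.
Qed.

Lemma inv m : forall j, (j <= m)%N -> inB (X j) /\ inB (Y j) /\ inB (Z j).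
Proof.
elim: m => [|m IH] j.
  by rewrite leqn0 => /eqP ->; rewrite /inB /=; split => //; split.
rewrite leq_eqVlt => /orP[/eqP ->|]; last exact: IH.
have Q : forall j, (j < m.+1)%N -> inB (Y j) /\ inB (Z j).
  by move=> i hi; have [_ [? ?]] := IH i hi.
have [_ [BYm BZm]] := IH m (leqnn m).
have [BX _] := step BYm BZm.
have T := tele xs Q.
have HZ : inB (Z m.+1).
  have L1 := LHS_xs m.+1.
  rewrite big_ltn // in T.
  have H1 : \sum_(1 <= j < m.+1) f xs / (4 * L) <= \sum_(1 <= j < m.+1) f (Y j) / (4 * L).
    apply: ler_sum => i _; rewrite ler_pM2r ?invr_gt0 ?mulr_gt0 //.
  rewrite sum_const_R in H1.
  have H2 := Hmin (Y m.+1).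
  have H3 : (m.+1%:R + 1) ^+ 2 / (4 * L) * f xs <= (m.+1%:R + 1) ^+ 2 / (4 * L) * f (Y m.+1).
    by rewrite ler_wpM2l // divr_ge0 ?sqr_ge0 // mulr_ge0 // ltW.
  rewrite /inB.
  change (dotv (Z m.+1 - xs) (Z m.+1 - xs) <= dotv (Z 0 - xs) (Z 0 - xs)).
  move: T L1 H1 H3; rewrite subn1 /= mulrSr.
  lra.
split => //; split => //.
by rewrite Yconv; apply: inB_conv => //; exact: tau01.
Qed.

Lemma dotv_sym_sub (a b : 'rV[R]_n) : dotv (a - b) (a - b) = dotv (b - a) (b - a).
Proof. by rewrite -opprB dotvNl dotvNr opprK. Qed.

Lemma LHS_quad m x y :
  LHSm m x - dotv (x - Z m) (x - Z m) / 2 = LHSm m y - dotv (y - Z m) (y - Z m) / 2.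
Proof.
elim: m x y => [|m IH] x y.
  by rewrite /LHSm !big_geq // !add0r (dotv_sym_sub x) (dotv_sym_sub y) !subrr.
have [_ [_ EZ]] := fgmS m.
set g := gf (X m.+1).
have e1 : forall w, dotv (w - Z m.+1) (w - Z m.+1) =
    dotv (w - Z m) (w - Z m) + 2 * al m * dotv g (w - Z m) + (al m) ^+ 2 * dotv g g.
  move=> w; rewrite EZ.
  have -> : w - (Z m - al m *: g) = (w - Z m) + al m *: g.
    by apply/rowP => i; rewrite !mxE; ring.
  exact: dot_expand.
have e2 : forall w, dotv g (w - X m.+1) = dotv g (w - Z m) + dotv g (Z m - X m.+1).
  by move=> w; rewrite -dotvDr addrA subrK.
move: (IH x y); rewrite /LHSm !big_nat_recr //= (e1 x) (e1 y) (e2 x) (e2 y).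
lra.
Qed.

Lemma model_eq m x : fgm_model f L gf x0 m x = LHSm m x.
Proof. by rewrite /fgm_model /LHSm enorm_sq [2^-1 * _]mulrC. Qed.

Lemma model_min m x : LHSm m (Z m) <= LHSm m x.
Proof.
have := LHS_quad m x (Z m).
rewrite subrr dotv0l mul0r subr0 => <-.
rewrite lerBlDr lerDl divr_ge0 ?dotv_ge0 //.
Qed.

Lemma ybar_bound N : (1 <= N)%N ->
  N%:R * (N%:R + 3) * f (fgm_ybar L gf x0 N)
    <= (N%:R + 1) ^+ 2 * f (Y N) + \sum_(1 <= k < N) f (Y k).
Proof.
move=> N1.
set yb := fgm_ybar L gf x0 N; set g := gf yb.
set c : R := N%:R * (N%:R + 3).
have c0 : c != 0.
  rewrite /c mulf_neq0 // ?gt_eqF // ?ltr_wpDl //.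
  by rewrite ltr0n.
have Hk : forall k, f yb + dotv g (Y k - yb) <= f (Y k) by move=> k; exact: grad_ineq.
have S1 : \sum_(1 <= k < N) (f yb + dotv g (Y k - yb)) <= \sum_(1 <= k < N) f (Y k).
  by apply: ler_sum => k _; exact: Hk.
rewrite big_split /= sum_const_R in S1.
have E1 : \sum_(1 <= k < N) dotv g (Y k - yb) = dotv g (\sum_(1 <= k < N) Y k) - (N - 1)%:R * dotv g yb.
  rewrite dotv_sum -sum_const_R -sumrB; apply: eq_bigr => k _; exact: dotvBr.
rewrite E1 natrB // in S1.
have S2 := ler_wpM2l (sqr_ge0 (N%:R + 1 : R)) (Hk N).
rewrite dotvBr in S2.
have E2 : c *: yb = \sum_(1 <= k < N) Y k + (N%:R + 1) ^+ 2 *: Y N.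
  by rewrite /yb /fgm_ybar scalerA -/c mulfV // scale1r.
have E3 : c * dotv g yb = dotv g (\sum_(1 <= k < N) Y k) + (N%:R + 1) ^+ 2 * dotv g (Y N).
  by rewrite -dotvZr E2 dotvDr dotvZr.
move: S1 S2 E3; rewrite /c; lra.
Qed.

Lemma key N u : (1 <= N)%N ->
  N%:R * (N%:R + 3) * f (fgm_ybar L gf x0 N) + 2 * L * dotv (Z N - u) (Z N - u)
    <= 4 * L * LHSm N u.
Proof.
move=> N1.
have Q : forall j, (j < N)%N -> inB (Y j) /\ inB (Z j).
  by move=> j hj; have [_ [? ?]] := inv (ltnW hj).
have T := tele u Q.
rewrite big_ltn // -mulr_suml in T.
have Yb := ybar_bound N1.
set S := \sum_(1 <= j < N) f (Y j) in T Yb.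
have T2 : (N%:R + 1) ^+ 2 * f (Y N) + S + 2 * L * dotv (Z N - u) (Z N - u) <= 4 * L * LHSm N u.
  have L4 : 0 < 4 * L by rewrite mulr_gt0.
  have iL4 : 0 < (4 * L)^-1 by rewrite invr_gt0.
  rewrite -(ler_pM2l iL4).
  have -> : (4 * L)^-1 * (4 * L * LHSm N u) = LHSm N u by field; rewrite gt_eqF.
  have -> : (4 * L)^-1 * ((N%:R + 1) ^+ 2 * f (Y N) + S + 2 * L * dotv (Z N - u) (Z N - u))
     = (N%:R + 1) ^+ 2 / (4 * L) * f (Y N) + S / (4 * L) + dotv (Z N - u) (Z N - u) / 2.
    by field; rewrite gt_eqF.
  lra.
lra.
Qed.

Lemma main N : (1 <= N)%N ->
  (forall k : nat, (k <= N)%N ->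
     enorm (fgm_x L gf x0 k - xs) <= enorm (x0 - xs) /\
     enorm (fgm_y L gf x0 k - xs) <= enorm (x0 - xs) /\
     enorm (fgm_z L gf x0 k - xs) <= enorm (x0 - xs)) /\
  (exists xm : 'rV[R]_n,
     (forall x, fgm_model f L gf x0 N xm <= fgm_model f L gf x0 N x) /\
     f (fgm_ybar L gf x0 N)
       <= 4 * L / (N%:R * (N%:R + 3)) * fgm_model f L gf x0 N xm) /\
  f (fgm_ybar L gf x0 N) - f xs
    <= 2 * L * enorm (fgm_z L gf x0 0 - xs) ^+ 2 / (N%:R * (N%:R + 3)) /\
  2 * L * enorm (fgm_z L gf x0 0 - xs) ^+ 2 / (N%:R * (N%:R + 3))
    <= 2 * L * enorm (x0 - xs) ^+ 2 / (N%:R + 1) ^+ 2.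
Proof.
move=> N1.
have Npos : 0 < (N%:R : R) by rewrite ltr0n.
have cpos : 0 < N%:R * (N%:R + 3) :> R by rewrite mulr_gt0 // ltr_wpDr // ltW.
have Nne : (N%:R : R) != 0 by rewrite gt_eqF.
have N3 : (N%:R + 3 : R) != 0 by rewrite gt_eqF // ltr_wpDr // ltW.
split.
  move=> k hk; have [a [b c]] := inv hk.
  by rewrite !enorm_le.
split.
  exists (Z N); split.
    by move=> x; rewrite !model_eq; exact: model_min.
  rewrite model_eq.
  have K := key (Z N) N1.
  rewrite subrr dotv0l mulr0 addr0 in K.
  rewrite -(ler_pM2l cpos).
  have -> : N%:R * (N%:R + 3) * (4 * L / (N%:R * (N%:R + 3)) * LHSm N (Z N)) = 4 * L * LHSm N (Z N).
    by field; rewrite N3 Nne.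
  exact: K.
split.
  have K := key xs N1.
  have L1 := LHS_xs N.
  have D0 : 0 <= dotv (Z N - xs) (Z N - xs) by exact: dotv_ge0.
  rewrite enorm_sq.
  rewrite ler_pdivlMr //.
  have E : 4 * L * (N%:R * (N%:R + 3) / (4 * L) * f xs + dotv (Z 0 - xs) (Z 0 - xs) / 2)
     = N%:R * (N%:R + 3) * f xs + 2 * L * dotv (Z 0 - xs) (Z 0 - xs).
    by field; rewrite gt_eqF.
  have L4 : 0 <= 4 * L by rewrite mulr_ge0 // ltW.
  have L2 := ler_wpM2l L4 L1.
  have D1 : 0 <= 2 * L * dotv (Z N - xs) (Z N - xs) by rewrite mulr_ge0 // mulr_ge0 // ltW.
  rewrite E in L2; lra.
have -> : fgm_z L gf x0 0 = x0 by [].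
have e0 : 0 <= 2 * L * enorm (x0 - xs) ^+ 2 by rewrite mulr_ge0 ?sqr_ge0 // mulr_ge0 // ltW.
apply: ler_wpM2l => //.
have N1' : 1 <= (N%:R : R) by rewrite ler1n.
rewrite lef_pV2 ?posrE ?exprn_gt0 ?ltr_wpDl //.
lra.
Qed.

End Coco.

Unset Implicit Arguments. Set Strict Implicit.

Theorem theorem1 (R : realType) (n : nat) (f : 'rV[R]_n -> R)
    (gf : 'rV[R]_n -> 'rV[R]_n) (xs x0 : 'rV[R]_n) (L : R) (N : nat) :
  convex_fun f ->
  has_gradient f gf ->
  (forall x : 'rV[R]_n, f xs <= f x) ->
  0 < L ->
  (forall x y : 'rV[R]_n, enorm (x - xs) <= enorm (x0 - xs) ->
     enorm (y - xs) <= enorm (x0 - xs) ->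
     enorm (gf y - gf x) <= L * enorm (y - x)) ->
  (1 <= N)%N ->
  (forall k : nat, (k <= N)%N ->
     enorm (fgm_x L gf x0 k - xs) <= enorm (x0 - xs) /\
     enorm (fgm_y L gf x0 k - xs) <= enorm (x0 - xs) /\
     enorm (fgm_z L gf x0 k - xs) <= enorm (x0 - xs)) /\
  (exists xm : 'rV[R]_n,
     (forall x, fgm_model f L gf x0 N xm <= fgm_model f L gf x0 N x) /\
     f (fgm_ybar L gf x0 N)
       <= 4 * L / (N%:R * (N%:R + 3)) * fgm_model f L gf x0 N xm) /\
  f (fgm_ybar L gf x0 N) - f xs
    <= 2 * L * enorm (fgm_z L gf x0 0 - xs) ^+ 2 / (N%:R * (N%:R + 3)) /\
  2 * L * enorm (fgm_z L gf x0 0 - xs) ^+ 2 / (N%:R * (N%:R + 3))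
    <= 2 * L * enorm (x0 - xs) ^+ 2 / (N%:R + 1) ^+ 2.
Proof.
move=> Hc Hg Hmin HL Lip N1.
exact: (main Hc Hg Hmin HL Lip N1).
Qed.
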